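(* Let $k$ be a field, $A, B$ $k$-algebras, $n \ge 1$, and $f: A \to M_n(B)$ a $k$-algebra homomorphism; let $f': \sqrt[n]{A} \to B$ be the homomorphism corresponding to $f$ under the adjunction, i.e. $f = M_n(f')\mu_{A,n}$. The following are equivalent: (i) $f$ is an epimorphism (of $k$-algebras); (ii) the dominion of $f(A)$ in $M_n(B)$ contains all matrix units $e_{ij}$, $1 \le i,j \le n$, and $f'$ is an epimorphism; (iii) $\sqrt[n]{f}: \sqrt[n]{A} \to \sqrt[n]{M_n(B)}$ is an epimorphism.
   Context: The $n$-matrix reduction functor $\sqrt[n]{-}: k\text{-}\mathsf{Alg} \to k\text{-}\mathsf{Alg}$ is the left adjoint of $M_n(-): k\text{-}\mathsf{Alg} \to k\text{-}\mathsf{Alg}$, with unit $\mu_{A,n}: A \to M_n(\sqrt[n]{A})$ such that every $k$-algebra map $f: A \to M_n(C)$ factors uniquely as $M_n(f')\mu_{A,n}$ with $f': \sqrt[n]{A} \to C$. An epimorphism $\varphi: R\to S$ is a map such that any two maps out of $S$ agreeing after composition with $\varphi$ are equal. For a subring $D \subseteq E$, the dominion of $D$ in $E$ is the largest subset of $E$ on which any two ring homomorphisms from $E$ that agree on $D$ must agree. *)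

(* Defs.v *)
From HB Require Import structures.
From mathcomp Require Import all_boot all_order all_algebra.
Set Implicit Arguments. Unset Strict Implicit. Unset Printing Implicit Defensive.
Import GRing.Theory.
Local Open Scope ring_scope.

Record kalg (k : fieldType) := KAlg {
  kcar :> pzRingType;
  kemb : {rmorphism k -> kcar};
  kemb_central : forall (c : k) (x : kcar), kemb c * x = x * kemb c
}.

Record khom (k : fieldType) (A B : kalg k) := KHom {
  khfun :> {rmorphism A -> B};
  khomP : forall c : k, khfun (kemb A c) = kemb B c
}.

Lemma scalar_mx_central (R : pzRingType) (n : nat) (a : R)
  (Ha : forall x : R, a * x = x * a) (x : 'M[R]_n) :
  a%:M *m x = x *m a%:M.
Proof.
apply/matrixP => i j; rewrite !mxE.
rewrite (bigD1 i) //= big1 ?addr0; last first.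
  by move=> l /negbTE nli; rewrite mxE eq_sym nli mulr0n mul0r.
rewrite (bigD1 j) //= big1 ?addr0; last first.
  by move=> l /negbTE nlj; rewrite mxE nlj mulr0n mulr0.
by rewrite !mxE !eqxx !mulr1n Ha.
Qed.

Definition matk (k : fieldType) (B : kalg k) (n : nat) : kalg k :=
  @KAlg k 'M[B]_n ((scalar_mx : B -> 'M[B]_n) \o kemb B)
    (fun c x => scalar_mx_central (kemb_central c) x).

Definition kepi (k : fieldType) (R S : kalg k) (phi : khom R S) : Prop :=
  forall (C : kalg k) (g h : khom S C),
    (forall r : R, g (phi r) = h (phi r)) -> forall s : S, g s = h s.

Definition in_dominion (E : pzRingType) (D : E -> Prop) (x : E) : Prop :=
  forall (C : pzRingType) (g h : {rmorphism E -> C}),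
    (forall d : E, D d -> g d = h d) -> g x = h x.

(* (R, mu) is an n-matrix reduction of A: mu : A -> M_n(R) is a universal
   arrow from A to the functor M_n(-), i.e. R = nroot A and mu = mu_{A,n}. *)
Definition is_nroot (k : fieldType) (n : nat) (A R : kalg k)
    (mu : khom A (matk R n)) : Prop :=
  forall (C : kalg k) (g : khom A (matk C n)),
    exists g' : khom R C,
      (forall a : A, g a = map_mx g' (mu a : 'M[R]_n)) /\
      (forall g'' : khom R C, (forall a : A, g a = map_mx g'' (mu a : 'M[R]_n)) ->
         forall r : R, g'' r = g' r).

(* Main.v *)
From HB Require Import structures.
Require Import Defs.
From mathcomp Require Import all_boot all_order all_algebra.
From mathcomp Require Import boolp.
Set Implicit Arguments. Unset Strict Implicit. Unset Printing Implicit Defensive.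
Import GRing.Theory.
Local Open Scope ring_scope.

Definition centp (C : pzRingType) (P : C -> Prop) : pred C :=
  fun x => `[< forall y, P y -> x * y = y * x >].

Lemma centpP (C : pzRingType) (P : C -> Prop) x :
  x \in centp P <-> (forall y, P y -> x * y = y * x).
Proof. rewrite unfold_in /centp; split => H; first exact/asboolP. exact/asboolP. Qed.

Fact centp_subring (C : pzRingType) (P : C -> Prop) : subring_closed (centp P).
Proof.
split.
- by apply/centpP => y _; rewrite mul1r mulr1.
- move=> x z /centpP Hx /centpP Hz; apply/centpP => y Py.
  by rewrite mulrBl mulrBr Hx // Hz.
- move=> x z /centpP Hx /centpP Hz; apply/centpP => y Py.
  by rewrite -mulrA Hz // mulrA Hx // mulrA.
Qed.


Record cent (C : pzRingType) (P : C -> Prop) := Cent {cval :> C; cvalP : cval \in centp P}.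
HB.instance Definition _ (C : pzRingType) (P : C -> Prop) := [isSub for @cval C P].
HB.instance Definition _ (C : pzRingType) (P : C -> Prop) := [Choice of cent P by <:].
HB.instance Definition _ (C : pzRingType) (P : C -> Prop) :=
  GRing.SubChoice_isSubPzRing.Build C (centp P) (cent P) (centp_subring P).


Section Corestr.
Variables (R C : pzRingType) (P : C -> Prop) (g : {rmorphism R -> C})
  (H : forall x, g x \in centp P).
Definition corestr : R -> cent P := fun x => Cent (H x).
Fact corestr_zmod : zmod_morphism corestr.
Proof. by move=> x y; apply: val_inj; rewrite /= rmorphB. Qed.
Fact corestr_monoid : monoid_morphism corestr.
Proof. by split; [apply: val_inj; rewrite /= rmorph1 | move=> x y; apply: val_inj; rewrite /= rmorphM]. Qed.
HB.instance Definition _ := GRing.isZmodMorphism.Build R (cent P) corestr corestr_zmod.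
HB.instance Definition _ := GRing.isMonoidMorphism.Build R (cent P) corestr corestr_monoid.
End Corestr.

Section Kalgs.
Variable k : fieldType.

Fact centk_central (C : pzRingType) (P : C -> Prop) (phi : {rmorphism k -> C})
  (H1 : forall c, phi c \in centp P) (H2 : forall c (x : C), x \in centp P -> phi c * x = x * phi c)
  c (x : cent P) : corestr H1 c * x = x * corestr H1 c.
Proof. by apply: val_inj; rewrite !rmorphM /= H2 // cvalP. Qed.

Definition centk (C : pzRingType) (P : C -> Prop) (phi : {rmorphism k -> C})
  (H1 : forall c, phi c \in centp P) (H2 : forall c (x : C), x \in centp P -> phi c * x = x * phi c) : kalg k :=
  @KAlg k (cent P) (corestr H1) (@centk_central C P phi H1 H2).

Definition khom_cent (R : kalg k) (C : pzRingType) (P : C -> Prop) (phi : {rmorphism k -> C})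
  (H1 : forall c, phi c \in centp P) (H2 : forall c (x : C), x \in centp P -> phi c * x = x * phi c)
  (g : {rmorphism R -> C}) (Hg : forall x, g x \in centp P)
  (Hk : forall c, g (kemb R c) = phi c) : khom R (centk H1 H2) :=
  @KHom k R (centk H1 H2) (corestr Hg) (fun c => @val_inj _ _ _ (corestr Hg (kemb R c)) (corestr H1 c) (Hk c)).

Fact mapk_P (R S : kalg k) (phi : khom R S) (n : nat) c :
  map_mx phi (kemb (matk R n) c : 'M[R]_n) = (kemb (matk S n) c : 'M[S]_n).
Proof. by rewrite /= map_scalar_mx khomP. Qed.

Definition mapk (R S : kalg k) (phi : khom R S) (n : nat) : khom (matk R n) (matk S n) :=
  @KHom k (matk R n) (matk S n) (map_mx phi : {rmorphism 'M[R]_n -> 'M[S]_n}) (@mapk_P R S phi n).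

Fact compk_P (R S T : kalg k) (f : khom R S) (g : khom S T) c :
  (g \o f) (kemb R c) = kemb T c.
Proof. by rewrite /= !khomP. Qed.

Definition compk (R S T : kalg k) (f : khom R S) (g : khom S T) : khom R T :=
  @KHom k R T (g \o f : {rmorphism R -> T}) (@compk_P R S T f g).

Definition scalk (R : kalg k) (n : nat) : khom R (matk R n) :=
  @KHom k R (matk R n) (@scalar_mx R n : {rmorphism R -> 'M[R]_n}) (fun c => erefl).

End Kalgs.
Lemma scalar_comm (R : pzRingType) n (a : R) (x : 'M[R]_n)
  (H : forall p q, a * x p q = x p q * a) : a%:M *m x = x *m a%:M.
Proof.
apply/matrixP => i j; rewrite !mxE.
rewrite (bigD1 i) //= big1 ?addr0; last first.
  by move=> l /negbTE nli; rewrite mxE eq_sym nli mulr0n mul0r.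
rewrite (bigD1 j) //= big1 ?addr0; last first.
  by move=> l /negbTE nlj; rewrite mxE nlj mulr0n mulr0.
by rewrite !mxE !eqxx !mulr1n H.
Qed.

Lemma scalar_delta (R : pzRingType) n (a : R) (i j : 'I_n) :
  a%:M *m delta_mx i j = delta_mx i j *m a%:M.
Proof. by apply: scalar_comm => p q; rewrite mxE commr_nat. Qed.

Lemma sandwich_entry (R : pzRingType) n (x : 'M[R]_n) l i j l' p q :
  ((delta_mx l i : 'M[R]_n) *m x *m (delta_mx j l' : 'M[R]_n)) p q = x i j *+ ((p == l) && (q == l')).
Proof.
rewrite mxE (bigD1 j) //= big1 ?addr0; last first.
  by move=> m /negbTE Hm; rewrite [delta_mx j l' m q]mxE Hm mulr0.
rewrite mxE (bigD1 i) //= big1 ?addr0; last first.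
  by move=> m /negbTE Hm; rewrite [delta_mx l i p m]mxE Hm andbF mul0r.
rewrite !mxE !eqxx andbT /=.
by case: (p == l); case: (q == l'); rewrite ?mul1r ?mulr1 ?mul0r ?mulr0.
Qed.

Lemma sandwich (R : pzRingType) n (x : 'M[R]_n) i j :
  (x i j)%:M = \sum_l (delta_mx l i : 'M[R]_n) *m x *m (delta_mx j l : 'M[R]_n).
Proof.
apply/matrixP => p q; rewrite summxE mxE.
under eq_bigr do rewrite sandwich_entry.
rewrite (bigD1 p) //= big1 ?addr0; last first.
  by move=> m /negbTE Hm; rewrite eq_sym Hm.
by rewrite eqxx eq_sym. Qed.

Theorem mainTheorem17 (k : fieldType) (A B : kalg k) (n : nat) (n_gt0 : (0 < n)%N)
  (RA : kalg k) (muA : khom A (matk RA n)) (HRA : is_nroot muA)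
  (RMB : kalg k) (muMB : khom (matk B n) (matk RMB n)) (HRMB : is_nroot muMB)
  (f : khom A (matk B n))
  (f' : khom RA B) (Hf' : forall a : A, f a = map_mx f' (muA a : 'M[RA]_n))
  (rf : khom RA RMB)
  (Hrf : forall a : A, map_mx rf (muA a : 'M[RA]_n) = muMB (f a)) :
  [<-> kepi f;
       (forall i j : 'I_n,
          in_dominion (fun x : 'M[B]_n => exists a : A, f a = x) (delta_mx i j))
       /\ kepi f';
       kepi rf].
Proof.
pose i0 := Ordinal n_gt0.
have scal_inj (C : pzRingType) (x y : C) : (x%:M : 'M[C]_n) = y%:M -> x = y.
  by move/matrixP => /(_ i0 i0); rewrite !mxE eqxx !mulr1n.
have i_iii : kepi f -> kepi rf.
  move=> Hf C g h Hgh s.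
  pose G := compk muMB (mapk g n); pose H := compk muMB (mapk h n).
  have eGH : forall x, G x = H x.
    apply: (Hf (matk C n) G H) => a /=.
    rewrite -Hrf; apply/matrixP => i j; rewrite !mxE; exact: Hgh.
  have [g' [_ Hu]] := HRMB C G.
  rewrite (Hu g _ s) // (Hu h _ s) // => a; exact: eGH.
have iii_i : kepi rf -> kepi f.
  move=> Hrfe C g h Hgh x.
  pose G := compk g (scalk C n); pose H := compk h (scalk C n).
  have [g' [Hg' _]] := HRMB C G.
  have [h' [Hh' _]] := HRMB C H.
  pose K := compk f G.
  have [u [_ Hu]] := HRA C K.
  have e : forall r, (compk rf g') r = (compk rf h') r.
    move=> r; rewrite (Hu (compk rf g') _ r) ?(Hu (compk rf h') _ r) // => a.
      transitivity (H (f a)); first by rewrite /= Hgh.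
      by rewrite Hh' -Hrf -map_mx_comp.
    transitivity (G (f a)); first by [].
    by rewrite Hg' -Hrf -map_mx_comp.
  apply: scal_inj.
  have -> : (g x)%:M = G x by [].
  have -> : (h x)%:M = H x by [].
  rewrite Hg' Hh'; apply/matrixP => i j; rewrite !mxE.
  exact: Hrfe.
have i_ii : kepi f -> (forall i j : 'I_n,
       in_dominion (fun x : 'M[B]_n => exists a : A, f a = x) (delta_mx i j)) /\ kepi f'.
  move=> Hf; split; last first.
    move=> C g h Hgh b; apply: scal_inj.
    have := Hf (matk C n) (mapk g n) (mapk h n) _ (b%:M : 'M[B]_n).
    rewrite /= !map_scalar_mx; apply => a.
    by rewrite Hf'; apply/matrixP => i j; rewrite !mxE Hgh.
  move=> i j C g h Hgh.
  pose phi := (g \o (kemb (matk B n) : {rmorphism k -> 'M[B]_n}) : {rmorphism k -> C}).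
  pose P := fun y : C => exists c, y = phi c.
  have gh_s : forall c, g (kemb (matk B n) c) = h (kemb (matk B n) c).
    by move=> c; apply: Hgh; exists (kemb A c); rewrite khomP.
  have H1 : forall c, phi c \in centp P.
    move=> c; apply/centpP => _ [d ->]; rewrite /phi /= -!(rmorphM g).
    by rewrite [X in g X = _](@kemb_central _ (matk B n)).
  have H2 : forall c (x : C), x \in centp P -> phi c * x = x * phi c.
    by move=> c x /centpP Hx; rewrite Hx //; exists c.
  have Hg : forall x, g x \in centp P.
    move=> x; apply/centpP => _ [d ->]; rewrite /phi /= -!(rmorphM g).
    by rewrite [X in _ = g X](@kemb_central _ (matk B n)).
  have Hh : forall x, h x \in centp P.
    move=> x; apply/centpP => _ [d ->]; rewrite /phi /= gh_s -!(rmorphM h).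
    by rewrite [X in _ = h X](@kemb_central _ (matk B n)).
  pose G := @khom_cent k (matk B n) C P phi H1 H2 g Hg (fun c => erefl).
  pose H := @khom_cent k (matk B n) C P phi H1 H2 h Hh (fun c => esym (gh_s c)).
  have eGH : forall x, G x = H x.
    apply: Hf => a; apply: val_inj; rewrite /= Hgh //; by exists a.
  exact: (congr1 val (eGH (delta_mx i j))).
have ii_i : (forall i j : 'I_n,
       in_dominion (fun x : 'M[B]_n => exists a : A, f a = x) (delta_mx i j)) /\ kepi f' -> kepi f.
  move=> [Hdom Hf'e] C g h Hgh.
  have He : forall i j, g (delta_mx i j) = h (delta_mx i j).
    by move=> i j; apply: (Hdom i j C g h) => _ [a <-]; apply: Hgh.
  pose P := fun y : C => exists i j, y = g (delta_mx i j).
  have H1 : forall c, kemb C c \in centp P.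
    by move=> c; apply/centpP => y _; apply: kemb_central.
  have H2 : forall c (x : C), x \in centp P -> kemb C c * x = x * kemb C c.
    by move=> c x _; apply: kemb_central.
  pose gs := (g \o (@scalar_mx B n : {rmorphism B -> 'M[B]_n}) : {rmorphism B -> C}).
  pose hs := (h \o (@scalar_mx B n : {rmorphism B -> 'M[B]_n}) : {rmorphism B -> C}).
  have Hg : forall b, gs b \in centp P.
    move=> b; apply/centpP => _ [i [j ->]]; rewrite /gs /= -!(rmorphM g).
    by rewrite [X in g X = _]scalar_delta.
  have Hh : forall b, hs b \in centp P.
    move=> b; apply/centpP => _ [i [j ->]]; rewrite /hs /= He -!(rmorphM h).
    by rewrite [X in h X = _]scalar_delta.
  pose G := @khom_cent k B C P (kemb C) H1 H2 gs Hg (khomP g).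
  pose H := @khom_cent k B C P (kemb C) H1 H2 hs Hh (khomP h).
  pose D := centk H1 H2.
  pose K := compk muA (mapk (compk f' G) n).
  have [u [_ Hu]] := HRA D K.
  have eGH : forall b, G b = H b.
    apply: Hf'e => r.
    have -> : G (f' r) = compk f' G r by [].
    have -> : H (f' r) = compk f' H r by [].
    rewrite (Hu (compk f' G) _ r) // (Hu (compk f' H) _ r) // => a.
    apply/matrixP => i j; rewrite !mxE; apply: val_inj => /=.
    rewrite -[f' _](_ : f a i j = _); last by rewrite Hf' mxE.
    rewrite (sandwich (f a) i j) !rmorph_sum; apply: eq_bigr => l _.
    by rewrite !rmorphM Hgh ?He //; exists a.
  move=> x; rewrite (matrix_sum_delta x) !rmorph_sum; apply: eq_bigr => i _.
  rewrite !rmorph_sum; apply: eq_bigr => j _.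
  rewrite -mul_scalar_mx !rmorphM He.
  by congr (_ * _); exact: (congr1 val (eGH (x i j))).
by split; [exact: i_ii | split; [by move=> /ii_i; apply: i_iii | exact: iii_i]].
Qed.
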